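(* Let $L$ be a linear ordering and let $\Phi(L)$ be the colored linear ordering defined in the context. Then the structure $(L,<,s,p)$ is homogeneous if and only if $\Phi(L)$ is homogeneous.
   Context: For a linear ordering $L$, $s(x)$ is the immediate successor of $x$ if it exists and $x$ otherwise; $p(x)$ is the immediate predecessor of $x$ if it exists and $x$ otherwise. A structure is homogeneous if every isomorphism between finitely generated substructures extends to an automorphism. The equivalence relation $x\sim_1 y$ holds iff only finitely many elements lie between $x$ and $y$; its classes (1-blocks) are convex, and each is isomorphic to $\omega$, $\omega^*$, $\zeta$ or a finite $n\ge1$. $\Phi(L)$ is the quotient ordering $L/\sim_1$ (with $[x]<[y]$ iff $x<y$ for elements of distinct blocks), expanded by unary predicates $w,z,sw,c_n$ ($n\ge1$): $w([x])$ iff $[x]\cong\omega$, $z([x])$ iff $[x]\cong\zeta$, $sw([x])$ iff $[x]\cong\omega^*$, and $c_n([x])$ iff $[x]$ has exactly $n$ elements. $\Phi(L)$ is regarded as a structure in the language $(<,w,z,sw,\{c_n\}_{n\ge1})$. *)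

(* Defs.v *)
From Stdlib Require Import List Arith ZArith ClassicalEpsilon.
Import ListNotations.

Set Implicit Arguments.

Section LinOrd.
Variable T : Type.
Variable lt : T -> T -> Prop.

Definition linear_order : Prop :=
  (forall x, ~ lt x x) /\
  (forall x y z, lt x y -> lt y z -> lt x z) /\
  (forall x y, x <> y -> lt x y \/ lt y x).

Definition is_imm_succ (x y : T) : Prop :=
  lt x y /\ ~ (exists z, lt x z /\ lt z y).
Definition is_imm_pred (x y : T) : Prop :=
  lt y x /\ ~ (exists z, lt y z /\ lt z x).

(** s(x) = immediate successor of x if it exists, x otherwise *)
Definition succ_fun (x : T) : T :=
  match excluded_middle_informative (exists y, is_imm_succ x y) with
  | left H => proj1_sig (constructive_indefinite_description _ H)
  | right _ => x
  end.

(** p(x) = immediate predecessor of x if it exists, x otherwise *)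
Definition pred_fun (x : T) : T :=
  match excluded_middle_informative (exists y, is_imm_pred x y) with
  | left H => proj1_sig (constructive_indefinite_description _ H)
  | right _ => x
  end.

Inductive gen (l : list T) : T -> Prop :=
| gen_base : forall x, In x l -> gen l x
| gen_succ : forall x, gen l x -> gen l (succ_fun x)
| gen_pred : forall x, gen l x -> gen l (pred_fun x).

Definition fg_substructure (A : T -> Prop) : Prop :=
  exists l : list T, forall x, A x <-> gen l x.

Definition iso_sp (A B : T -> Prop) (f : T -> T) : Prop :=
  (forall x, A x -> B (f x)) /\
  (forall y, B y -> exists x, A x /\ f x = y) /\
  (forall x y, A x -> A y -> f x = f y -> x = y) /\
  (forall x y, A x -> A y -> (lt x y <-> lt (f x) (f y))) /\
  (forall x, A x -> f (succ_fun x) = succ_fun (f x)) /\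
  (forall x, A x -> f (pred_fun x) = pred_fun (f x)).

Definition aut_sp (g : T -> T) : Prop :=
  (forall x y, g x = g y -> x = y) /\
  (forall y, exists x, g x = y) /\
  (forall x y, lt x y <-> lt (g x) (g y)) /\
  (forall x, g (succ_fun x) = succ_fun (g x)) /\
  (forall x, g (pred_fun x) = pred_fun (g x)).

Definition homogeneous_sp : Prop :=
  forall (A B : T -> Prop) (f : T -> T),
    fg_substructure A -> fg_substructure B -> iso_sp A B f ->
    exists g, aut_sp g /\ forall x, A x -> g x = f x.

Definition strictly_between (x y z : T) : Prop :=
  (lt x z /\ lt z y) \/ (lt y z /\ lt z x).

Definition sim1 (x y : T) : Prop :=
  exists l : list T, forall z, strictly_between x y z -> In z l.

Definition block (x : T) : T -> Prop := fun y => sim1 x y.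

(** the quotient L / ~1, whose elements are the 1-blocks *)
Definition Phi : Type := { P : T -> Prop | exists x, P = block x }.

Definition Phi_lt (a b : Phi) : Prop :=
  exists x y, proj1_sig a x /\ proj1_sig b y /\ ~ sim1 x y /\ lt x y.

Definition block_iso_omega (x : T) : Prop :=
  exists h : nat -> T,
    (forall n, sim1 x (h n)) /\ (forall y, sim1 x y -> exists n, h n = y) /\
    (forall m n, m < n <-> lt (h m) (h n)).
Definition block_iso_omega_star (x : T) : Prop :=
  exists h : nat -> T,
    (forall n, sim1 x (h n)) /\ (forall y, sim1 x y -> exists n, h n = y) /\
    (forall m n, m < n <-> lt (h n) (h m)).
Definition block_iso_zeta (x : T) : Prop :=
  exists h : Z -> T,
    (forall n, sim1 x (h n)) /\ (forall y, sim1 x y -> exists n, h n = y) /\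
    (forall m n, (m < n)%Z <-> lt (h m) (h n)).
Definition block_card (n : nat) (x : T) : Prop :=
  exists l : list T, NoDup l /\ length l = n /\ forall y, sim1 x y <-> In y l.

Definition Phi_w (a : Phi) : Prop :=
  exists x, proj1_sig a x /\ block_iso_omega x.
Definition Phi_z (a : Phi) : Prop :=
  exists x, proj1_sig a x /\ block_iso_zeta x.
Definition Phi_sw (a : Phi) : Prop :=
  exists x, proj1_sig a x /\ block_iso_omega_star x.
Definition Phi_c (n : nat) (a : Phi) : Prop :=
  1 <= n /\ exists x, proj1_sig a x /\ block_card n x.

(* relational language: finitely generated substructures = finite subsets *)
Definition fin_subset (A : Phi -> Prop) : Prop :=
  exists l : list Phi, forall a, A a <-> In a l.

Definition iso_Phi (A B : Phi -> Prop) (f : Phi -> Phi) : Prop :=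
  (forall a, A a -> B (f a)) /\
  (forall b, B b -> exists a, A a /\ f a = b) /\
  (forall a b, A a -> A b -> f a = f b -> a = b) /\
  (forall a b, A a -> A b -> (Phi_lt a b <-> Phi_lt (f a) (f b))) /\
  (forall a, A a -> (Phi_w a <-> Phi_w (f a))) /\
  (forall a, A a -> (Phi_z a <-> Phi_z (f a))) /\
  (forall a, A a -> (Phi_sw a <-> Phi_sw (f a))) /\
  (forall n a, 1 <= n -> A a -> (Phi_c n a <-> Phi_c n (f a))).

Definition aut_Phi (g : Phi -> Phi) : Prop :=
  (forall a b, g a = g b -> a = b) /\
  (forall b, exists a, g a = b) /\
  (forall a b, Phi_lt a b <-> Phi_lt (g a) (g b)) /\
  (forall a, Phi_w a <-> Phi_w (g a)) /\
  (forall a, Phi_z a <-> Phi_z (g a)) /\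
  (forall a, Phi_sw a <-> Phi_sw (g a)) /\
  (forall n a, 1 <= n -> (Phi_c n a <-> Phi_c n (g a))).

Definition homogeneous_Phi : Prop :=
  forall (A B : Phi -> Prop) (f : Phi -> Phi),
    fin_subset A -> fin_subset B -> iso_Phi A B f ->
    exists g, aut_Phi g /\ forall a, A a -> g a = f a.

End LinOrd.

(* Main.v *)
Require Import Defs.
From Stdlib Require Import List Arith ZArith Lia ClassicalEpsilon Classical FunctionalExtensionality PropExtensionality ProofIrrelevance.
Import ListNotations.
Set Implicit Arguments.

Section Gen.
Context {T : Type}.
Implicit Types (R : T -> T -> Prop) (x y z u v w : T).

Definition rv (R : T -> T -> Prop) x y := R y x.
Definition imm (R : T -> T -> Prop) x y := R x y /\ ~ (exists z, R x z /\ R z y).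
Definition is_next (R : T -> T -> Prop) (sg : T -> T) :=
  forall x, imm R x (sg x) \/ ((~ exists y, imm R x y) /\ sg x = x).

Lemma lin_irr R (HR : linear_order R) x : ~ R x x.
Proof. apply HR. Qed.
Lemma lin_trans R (HR : linear_order R) x y z : R x y -> R y z -> R x z.
Proof. apply HR. Qed.
Lemma lin_tot R (HR : linear_order R) x y : x = y \/ R x y \/ R y x.
Proof. destruct (classic (x = y)); auto. right. apply HR; auto. Qed.
Lemma lin_asym R (HR : linear_order R) x y : R x y -> R y x -> False.
Proof. intros. apply (lin_irr HR x). eapply (lin_trans HR); eauto. Qed.

Lemma lin_rv R (HR : linear_order R) : linear_order (rv R).
Proof. unfold rv. destruct HR as [H1 [H2 H3]]. split; [|split]; eauto.
  Qed.

Lemma sb_rv R x y z : strictly_between (rv R) x y z <-> strictly_between R x y z.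
Proof. unfold strictly_between, rv. tauto. Qed.

Lemma sim1_rv R x y : sim1 (rv R) x y <-> sim1 R x y.
Proof. unfold sim1. split; intros [l Hl]; exists l; intros z Hz; apply Hl; apply sb_rv; auto.
  Qed.

Lemma sim1_refl R (HR : linear_order R) x : sim1 R x x.
Proof. exists []. intros z [[H1 H2]|[H1 H2]]; exfalso; eapply (lin_asym HR); eauto. Qed.

Lemma sim1_sym R x y : sim1 R x y -> sim1 R y x.
Proof. intros [l Hl]. exists l. intros z Hz. apply Hl. unfold strictly_between in *. tauto. Qed.

Lemma sim1_trans R (HR : linear_order R) x y z : sim1 R x y -> sim1 R y z -> sim1 R x z.
Proof.
  intros [l1 H1] [l2 H2]. exists (l1 ++ l2 ++ [y]). intros w Hw.
  apply in_or_app. destruct (lin_tot HR w y) as [E|[E|E]].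
  - right. apply in_or_app. right. left. auto.
  - destruct Hw as [[A B]|[A B]].
    + left. apply H1. left. auto.
    + right. apply in_or_app. left. apply H2. right. auto.
  - destruct Hw as [[A B]|[A B]].
    + right. apply in_or_app. left. apply H2. left. auto.
    + left. apply H1. right. auto.
Qed.

Lemma sim1_convex R (HR : linear_order R) x y z : sim1 R x y -> R x z -> R z y -> sim1 R x z.
Proof.
  intros [l H] A B. exists l. intros w [[C D]|[C D]].
  - apply H. left. split; auto. eapply (lin_trans HR); eauto.
  - exfalso. eapply (lin_asym HR); [eauto| eapply (lin_trans HR); eauto].
Qed.

Lemma sim1_between R (HR : linear_order R) x y z : sim1 R x y -> strictly_between R x y z -> sim1 R x z.
Proof.
  intros H [[A B]|[A B]].
  - eapply sim1_convex; eauto.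
  - apply sim1_trans with y; auto. eapply sim1_convex; eauto. apply sim1_sym; auto.
Qed.

Lemma sim1_imm R (HR : linear_order R) x y : imm R x y -> sim1 R x y.
Proof. intros [A B]. exists []. intros z [[C D]|[C D]].
  - exfalso; apply B; eauto.
  - exfalso. eapply (lin_asym HR); [apply A| eapply (lin_trans HR); eauto]. Qed.

Lemma imm_unique R (HR : linear_order R) x y y' : imm R x y -> imm R x y' -> y = y'.
Proof.
  intros [A B] [C D]. destruct (lin_tot HR y y') as [E|[E|E]]; auto.
  - exfalso; apply D; eauto.
  - exfalso; apply B; eauto.
Qed.

Lemma next_imm R (HR : linear_order R) sg (Hs : is_next R sg) x y : imm R x y -> sg x = y.
Proof. intros H. destruct (Hs x) as [H1|[H1 _]].
  - eapply imm_unique; eauto.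
  - exfalso; eauto. Qed.

Lemma sim1_next R (HR : linear_order R) sg (Hs : is_next R sg) x : sim1 R x (sg x).
Proof. destruct (Hs x) as [H1|[_ H1]].
  - apply sim1_imm; auto.
  - rewrite H1. apply sim1_refl; auto. Qed.

Lemma sim1_iter R (HR : linear_order R) sg (Hs : is_next R sg) n x : sim1 R x (Nat.iter n sg x).
Proof. induction n; simpl. apply sim1_refl; auto.
  eapply sim1_trans; eauto. apply sim1_next; auto. Qed.

Lemma iter_add (f : T -> T) m n x : Nat.iter (m + n) f x = Nat.iter m f (Nat.iter n f x).
Proof. induction m; simpl; congruence. Qed.

Lemma iter_fix (f : T -> T) x n : f x = x -> Nat.iter n f x = x.
Proof. intros H; induction n; simpl; congruence. Qed.

Lemma list_remove (l : list T) z : In z l ->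
  exists l', length l' < length l /\ forall w, In w l -> w <> z -> In w l'.
Proof.
  induction l as [|a l IH]; simpl; intros H; [contradiction|].
  destruct (classic (a = z)) as [E|E].
  - exists l. split; [lia|]. intros w [A|A] B; [congruence|auto].
  - destruct H as [H|H]; [congruence|]. destruct (IH H) as [l' [L1 L2]].
    exists (a :: l'). simpl. split; [lia|]. intros w [A|A] B; auto.
Qed.

Lemma chain R (HR : linear_order R) sg (Hs : is_next R sg) x y :
  R x y -> sim1 R x y -> exists n, Nat.iter n sg x = y.
Proof.
  intros Hxy [l Hl].
  remember (length l) as k. revert l Heqk x y Hxy Hl.
  induction k as [k IH] using (well_founded_induction lt_wf).
  intros l Hk x y Hxy Hl.
  destruct (classic (exists z, R x z /\ R z y)) as [[z [A B]]|N].
  - assert (Iz : In z l) by (apply Hl; left; auto).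
    destruct (list_remove l z Iz) as [l' [L1 L2]].
    destruct (IH (length l') ltac:(lia) l' eq_refl x z A) as [n1 E1].
    { intros w Hw. destruct Hw as [[C D]|[C D]].
      - apply L2. apply Hl. left. split; auto. eapply (lin_trans HR); eauto.
        intro; subst. eapply (lin_irr HR); eauto.
      - exfalso. eapply (lin_asym HR); [apply A| eapply (lin_trans HR); eauto]. }
    destruct (IH (length l') ltac:(lia) l' eq_refl z y B) as [n2 E2].
    { intros w Hw. destruct Hw as [[C D]|[C D]].
      - apply L2. apply Hl. left. split; auto. eapply (lin_trans HR); eauto.
        intro; subst. eapply (lin_irr HR); eauto.
      - exfalso. eapply (lin_asym HR); [apply B| eapply (lin_trans HR); eauto]. }
    exists (n2 + n1). rewrite iter_add. congruence.
  - exists 1. simpl. apply next_imm with R; auto. split; auto.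
Qed.

Lemma next_step R (HR : linear_order R) sg (Hs : is_next R sg) u v :
  R u v -> sim1 R u v -> R u (sg u).
Proof.
  intros A B. destruct (Hs u) as [[H _]|[_ H]]; auto.
  destruct (chain HR Hs A B) as [n E]. rewrite iter_fix in E; auto.
  subst. exfalso. eapply (lin_irr HR); eauto.
Qed.

End Gen.
Section Gen2.
Context {T : Type}.
Implicit Types (R : T -> T -> Prop) (x y z u v w : T).

Lemma succ_next R : is_next R (succ_fun R).
Proof. intro x. unfold succ_fun.
  destruct (excluded_middle_informative _) as [H|H].
  - left. destruct (constructive_indefinite_description _ H). simpl. exact i.
  - right. split; auto. Qed.

Lemma pred_next R : is_next (rv R) (pred_fun R).
Proof. intro x. unfold pred_fun.
  destruct (excluded_middle_informative _) as [H|H].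
  - left. destruct (constructive_indefinite_description _ H) as [y [A B]]. simpl.
    split; auto. intros [z [C D]]. apply B. exists z. split; auto.
  - right. split; auto. intros [y [A B]]. apply H. exists y. split; auto.
    intros [z [C D]]. apply B. exists z. split; auto. Qed.

Definition blockiso R x y (f : T -> T) :=
  (forall u, sim1 R x u -> sim1 R y (f u)) /\
  (forall v, sim1 R y v -> exists u, sim1 R x u /\ f u = v) /\
  (forall u u', sim1 R x u -> sim1 R x u' -> (R u u' <-> R (f u) (f u'))).

Lemma blockiso_inj R (HR : linear_order R) x y f u u' :
  blockiso R x y f -> sim1 R x u -> sim1 R x u' -> f u = f u' -> u = u'.
Proof. intros [_ [_ H]] A B E. destruct (lin_tot HR u u') as [C|[C|C]]; auto.
  - apply (H _ _ A B) in C. rewrite E in C. exfalso; eapply (lin_irr HR); eauto.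
  - apply (H _ _ B A) in C. rewrite E in C. exfalso; eapply (lin_irr HR); eauto. Qed.

Lemma blockiso_rv R x y f : blockiso R x y f -> blockiso (rv R) x y f.
Proof. intros [A [B C]]. split; [|split].
  - intros u H. apply sim1_rv. apply A. apply sim1_rv; auto.
  - intros v H. apply sim1_rv in H. destruct (B v H) as [u [D E]]. exists u. split; auto. apply sim1_rv; auto.
  - intros u u' H1 H2. apply sim1_rv in H1. apply sim1_rv in H2. unfold rv. apply C; auto. Qed.

Lemma blockiso_shift R (HR : linear_order R) x y x' y' f :
  blockiso R x y f -> sim1 R x x' -> sim1 R y y' -> blockiso R x' y' f.
Proof. intros [A [B C]] H1 H2.
  assert (K1 : forall u, sim1 R x' u <-> sim1 R x u).
  { split; intro. eapply (sim1_trans HR); eauto. eapply (sim1_trans HR); eauto. apply sim1_sym; auto. }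
  assert (K2 : forall u, sim1 R y' u <-> sim1 R y u).
  { split; intro. eapply (sim1_trans HR); eauto. eapply (sim1_trans HR); eauto. apply sim1_sym; auto. }
  split; [|split].
  - intros u H. apply K2. apply A. apply K1. auto.
  - intros v H. apply K2 in H. destruct (B v H) as [u [D E]]. exists u. split; auto. apply K1; auto.
  - intros u u' D E. apply C; apply K1; auto. Qed.

Lemma blockiso_ext R x y f g :
  blockiso R x y f -> (forall u, sim1 R x u -> f u = g u) -> blockiso R x y g.
Proof. intros [A [B C]] E. split; [|split].
  - intros u H. rewrite <- E; auto.
  - intros v H. destruct (B v H) as [u [D F]]. exists u. rewrite <- E; auto.
  - intros u u' D F. rewrite <- !E; auto. Qed.

Lemma blockiso_next R (HR : linear_order R) sg (Hs : is_next R sg) x y f u :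
  blockiso R x y f -> sim1 R x u -> f (sg u) = sg (f u).
Proof.
  intros Hf Hu. pose proof Hf as [A [B C]].
  destruct (Hs u) as [H1|[H1 H2]].
  - symmetry. apply (next_imm HR Hs). destruct H1 as [D E].
    assert (Hv : sim1 R x (sg u)) by (eapply (sim1_trans HR); eauto; apply sim1_next; auto).
    split. apply (proj1 (C u (sg u) Hu Hv)); auto.
    intros [w [F G]].
    assert (Hw : sim1 R y w).
    { apply (sim1_trans HR) with (f u). apply A; auto.
      apply (sim1_convex HR) with (f (sg u)); auto. apply (sim1_trans HR) with y. apply sim1_sym; apply A; auto. apply A; auto. }
    destruct (B w Hw) as [t [Ht Et]]. subst w. apply E. exists t.
    split; [apply (proj2 (C u t Hu Ht)) | apply (proj2 (C t (sg u) Ht Hv))]; auto.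
  - rewrite H2. destruct (Hs (f u)) as [[D E]|[_ D]]; auto.
    exfalso. apply H1.
    assert (Hw : sim1 R y (sg (f u))).
    { apply (sim1_trans HR) with (f u). apply A; auto. apply sim1_next; auto. }
    destruct (B _ Hw) as [t [Ht Et]]. exists t. split.
    + apply (proj2 (C u t Hu Ht)). rewrite Et; auto.
    + intros [z [F G]]. apply E. exists (f z).
      assert (Hz : sim1 R x z).
      { apply (sim1_trans HR) with u; auto. apply (sim1_convex HR) with t; auto. apply (sim1_trans HR) with x; auto. apply sim1_sym; auto. }
      rewrite <- Et. split; [apply (proj1 (C u z Hu Hz)) | apply (proj1 (C z t Hz Ht))]; auto.
Qed.

End Gen2.
Section Main.
Context {T : Type} (lt : T -> T -> Prop) (HL : linear_order lt).
Implicit Types (x y z u v w : T).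

Lemma blockiso_inv x y f : blockiso lt x y f -> exists g, blockiso lt y x g.
Proof.
  intros Hf. pose proof Hf as [A [B C]].
  set (g := fun v => match excluded_middle_informative (exists u, sim1 lt x u /\ f u = v) with
                     | left H => proj1_sig (constructive_indefinite_description _ H)
                     | right _ => v end).
  assert (Hg : forall v, sim1 lt y v -> sim1 lt x (g v) /\ f (g v) = v).
  { intros v Hv. unfold g. destruct (excluded_middle_informative _) as [H|H].
    - destruct (constructive_indefinite_description _ H) as [u Hu]. simpl. auto.
    - exfalso. apply H. auto. }
  exists g. split; [|split].
  - intros v Hv. apply Hg; auto.
  - intros u Hu. exists (f u). split. apply A; auto.
    destruct (Hg (f u)) as [D E]. apply A; auto.
    apply (blockiso_inj HL Hf); auto.
  - intros v v' Hv Hv'. destruct (Hg v Hv) as [D1 E1]. destruct (Hg v' Hv') as [D2 E2].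
    rewrite (C _ _ D1 D2). rewrite E1, E2. tauto.
Qed.

Lemma NoDup_map_on (f : T -> T) (l : list T) :
  (forall a b, In a l -> In b l -> f a = f b -> a = b) -> NoDup l -> NoDup (map f l).
Proof.
  induction l as [|a l IH]; simpl; intros H N. constructor.
  inversion N; subst. constructor.
  - intro I. apply in_map_iff in I. destruct I as [b [E I]].
    assert (a = b) by (apply H; auto). subst. contradiction.
  - apply IH; auto.
Qed.

Lemma tr_omega x y f : blockiso lt x y f -> block_iso_omega lt x -> block_iso_omega lt y.
Proof. intros [A [B C]] [h [H1 [H2 H3]]]. exists (fun n => f (h n)). split; [|split].
  - intros n. apply A. auto.
  - intros v Hv. destruct (B v Hv) as [u [D E]]. destruct (H2 u D) as [n En]. exists n. congruence.
  - intros m n. rewrite H3. apply C; auto. Qed.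

Lemma tr_omega_star x y f : blockiso lt x y f -> block_iso_omega_star lt x -> block_iso_omega_star lt y.
Proof. intros [A [B C]] [h [H1 [H2 H3]]]. exists (fun n => f (h n)). split; [|split].
  - intros n. apply A. auto.
  - intros v Hv. destruct (B v Hv) as [u [D E]]. destruct (H2 u D) as [n En]. exists n. congruence.
  - intros m n. rewrite H3. apply C; auto. Qed.

Lemma tr_zeta x y f : blockiso lt x y f -> block_iso_zeta lt x -> block_iso_zeta lt y.
Proof. intros [A [B C]] [h [H1 [H2 H3]]]. exists (fun n => f (h n)). split; [|split].
  - intros n. apply A. auto.
  - intros v Hv. destruct (B v Hv) as [u [D E]]. destruct (H2 u D) as [n En]. exists n. congruence.
  - intros m n. rewrite H3. apply C; auto. Qed.

Lemma tr_card n x y f : blockiso lt x y f -> block_card lt n x -> block_card lt n y.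
Proof. intros Hf [l [N [L H]]]. pose proof Hf as [A [B C]]. exists (map f l). split; [|split].
  - apply NoDup_map_on; auto. intros a b Ia Ib. apply (blockiso_inj HL Hf); apply H; auto.
  - rewrite length_map; auto.
  - intros v. split.
    + intros Hv. destruct (B v Hv) as [u [D E]]. apply in_map_iff. exists u. split; auto. apply H; auto.
    + intros I. apply in_map_iff in I. destruct I as [u [E I]]. subst. apply A. apply H; auto.
Qed.

Definition same_type x y :=
  (block_iso_omega lt x <-> block_iso_omega lt y) /\
  (block_iso_zeta lt x <-> block_iso_zeta lt y) /\
  (block_iso_omega_star lt x <-> block_iso_omega_star lt y) /\
  (forall n, block_card lt n x <-> block_card lt n y).

Lemma blockiso_same x y f : blockiso lt x y f -> same_type x y.
Proof. intros Hf. destruct (blockiso_inv Hf) as [g Hg].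
  split; [|split; [|split]]; [split; eapply tr_omega; eauto | split; eapply tr_zeta; eauto
   | split; eapply tr_omega_star; eauto | intro n; split; eapply tr_card; eauto]. Qed.

Lemma param_iso (I : Type) (ltI : I -> I -> Prop) (D : I -> Prop) (h1 h2 : I -> T) x y :
  (forall i, D i -> sim1 lt x (h1 i)) -> (forall u, sim1 lt x u -> exists i, D i /\ h1 i = u) ->
  (forall i j, D i -> D j -> (ltI i j <-> lt (h1 i) (h1 j))) ->
  (forall i, D i -> sim1 lt y (h2 i)) -> (forall u, sim1 lt y u -> exists i, D i /\ h2 i = u) ->
  (forall i j, D i -> D j -> (ltI i j <-> lt (h2 i) (h2 j))) ->
  exists f, blockiso lt x y f.
Proof.
  intros A1 B1 C1 A2 B2 C2.
  set (f := fun u => match excluded_middle_informative (exists i, D i /\ h1 i = u) with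
                     | left H => h2 (proj1_sig (constructive_indefinite_description _ H))
                     | right _ => u end).
  assert (Hf : forall u, sim1 lt x u -> exists i, D i /\ h1 i = u /\ f u = h2 i).
  { intros u Hu. unfold f. destruct (excluded_middle_informative _) as [H|H].
    - destruct (constructive_indefinite_description _ H) as [i [Di Ei]]. simpl. eauto.
    - exfalso. apply H. auto. }
  assert (K : forall i j, D i -> D j -> h1 i = h1 j -> h2 i = h2 j).
  { intros i j Di Dj E. destruct (lin_tot HL (h2 i) (h2 j)) as [F|[F|F]]; auto.
    - apply C2 in F; auto. apply C1 in F; auto. rewrite E in F. exfalso; eapply (lin_irr HL); eauto.
    - apply C2 in F; auto. apply C1 in F; auto. rewrite E in F. exfalso; eapply (lin_irr HL); eauto. }
  exists f. split; [|split].
  - intros u Hu. destruct (Hf u Hu) as [i [Di [Ei Fi]]]. rewrite Fi. auto.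
  - intros v Hv. destruct (B2 v Hv) as [j [Dj Ej]]. exists (h1 j). split; auto.
    destruct (Hf (h1 j) (A1 j Dj)) as [i [Di [Ei Fi]]]. rewrite Fi. rewrite <- Ej. apply K; auto.
  - intros u u' Hu Hu'. destruct (Hf u Hu) as [i [Di [Ei Fi]]]. destruct (Hf u' Hu') as [j [Dj [Ej Fj]]].
    rewrite Fi, Fj, <- Ei, <- Ej. rewrite <- C1, <- C2; auto. tauto.
Qed.

End Main.
Section Mono.
Context {T : Type}.
Implicit Types (R : T -> T -> Prop).

Lemma mono_bnd R (HR : linear_order R) (h : nat -> T) N :
  (forall i, i < N -> R (h i) (h (S i))) ->
  forall i j, i <= N -> j <= N -> (i < j <-> R (h i) (h j)).
Proof.
  intros H.
  assert (F : forall k i, i + S k <= N -> R (h i) (h (i + S k))).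
  { induction k; intros i Hi.
    - replace (i + 1) with (S i) by lia. apply H. lia.
    - eapply (lin_trans HR). apply IHk. lia. replace (i + S (S k)) with (S (i + S k)) by lia. apply H. lia. }
  assert (G : forall i j, i <= N -> j <= N -> i < j -> R (h i) (h j)).
  { intros i j Hi Hj Hij. replace j with (i + S (j - i - 1)) by lia. apply F. lia. }
  intros i j Hi Hj. split; auto. intros Hr.
  destruct (Nat.lt_trichotomy i j) as [E|[E|E]]; auto.
  - subst. exfalso. eapply (lin_irr HR); eauto.
  - exfalso. eapply (lin_asym HR); eauto.
Qed.

Lemma mono_nat R (HR : linear_order R) (h : nat -> T) :
  (forall i, R (h i) (h (S i))) -> forall i j, i < j <-> R (h i) (h j).
Proof. intros H i j. apply (mono_bnd HR h (N := i + j)); auto; lia. Qed.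

Lemma mono_Z R (HR : linear_order R) (h : Z -> T) :
  (forall z, R (h z) (h (z + 1)%Z)) -> forall m n, (m < n)%Z <-> R (h m) (h n).
Proof.
  intros H.
  assert (F : forall k m, R (h m) (h (m + Z.of_nat (S k))%Z)).
  { induction k; intros m.
    - replace (m + Z.of_nat 1)%Z with (m + 1)%Z by lia. apply H.
    - eapply (lin_trans HR). apply IHk. replace (m + Z.of_nat (S (S k)))%Z with ((m + Z.of_nat (S k)) + 1)%Z by lia. apply H. }
  assert (G : forall m n, (m < n)%Z -> R (h m) (h n)).
  { intros m n Hmn. replace n with (m + Z.of_nat (S (Z.to_nat (n - m - 1))))%Z by lia. apply F. }
  intros m n. split; auto. intros Hr.
  destruct (Z.lt_trichotomy m n) as [E|[E|E]]; auto.
  - subst. exfalso. eapply (lin_irr HR); eauto.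
  - exfalso. eapply (lin_asym HR); eauto.
Qed.

Lemma min_nat (P : nat -> Prop) : (exists n, P n) -> exists n, P n /\ forall k, k < n -> ~ P k.
Proof.
  intros [n Hn]. revert Hn. induction n as [n IH] using (well_founded_induction lt_wf). intros Hn.
  destruct (classic (exists k, k < n /\ P k)) as [[k [A B]]|N].
  - apply (IH k A B).
  - exists n. split; auto. intros k A B. apply N; eauto.
Qed.

End Mono.

Section Cls.
Context {T : Type} (lt : T -> T -> Prop) (HL : linear_order lt).
Implicit Types (x y z u v w : T).

Lemma sim1_via x a b : sim1 lt x a -> sim1 lt x b -> sim1 lt a b.
Proof. intros A B. apply (sim1_trans HL) with x; auto. apply sim1_sym; auto. Qed.

Let s := succ_fun lt.
Let p := pred_fun lt.

Lemma sim1_s n x : sim1 lt x (Nat.iter n s x).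
Proof. exact (sim1_iter HL (succ_next lt) n x). Qed.
Lemma sim1_p n x : sim1 lt x (Nat.iter n p x).
Proof. apply sim1_rv. exact (sim1_iter (lin_rv HL) (pred_next lt) n x). Qed.
Lemma chain_s x y : lt x y -> sim1 lt x y -> exists n, Nat.iter n s x = y.
Proof. apply (chain HL (succ_next lt)). Qed.
Lemma chain_p x y : lt y x -> sim1 lt x y -> exists n, Nat.iter n p x = y.
Proof. intros A B. apply (chain (lin_rv HL) (pred_next lt)); auto. apply sim1_rv; auto. Qed.
Lemma step_s u v : lt u v -> sim1 lt u v -> lt u (s u).
Proof. apply (next_step HL (succ_next lt)). Qed.
Lemma step_p u v : lt v u -> sim1 lt u v -> lt (p u) u.
Proof. intros A B. apply (next_step (lin_rv HL) (pred_next lt) (v := v)); auto. apply sim1_rv; auto. Qed.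

Definition fin_param x N (h : nat -> T) :=
  (forall i, i <= N -> sim1 lt x (h i)) /\ (forall u, sim1 lt x u -> exists i, i <= N /\ h i = u) /\
  (forall i j, i <= N -> j <= N -> (i < j <-> lt (h i) (h j))).

Lemma classify x : block_iso_omega lt x \/ block_iso_omega_star lt x \/ block_iso_zeta lt x \/
  exists N h, fin_param x N h.
Proof.
  assert (up : (~ exists M, sim1 lt x M /\ forall y, sim1 lt x y -> ~ lt M y) ->
               forall u, sim1 lt x u -> lt u (s u)).
  { intros NM u Hu. destruct (classic (exists v, sim1 lt x v /\ lt u v)) as [[v [A B]]|N].
    - apply step_s with v; auto. eapply sim1_via; eauto.
    - exfalso. apply NM. exists u. split; auto. intros y Hy Hl. apply N; eauto. }
  assert (down : (~ exists m, sim1 lt x m /\ forall y, sim1 lt x y -> ~ lt y m) ->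
               forall u, sim1 lt x u -> lt (p u) u).
  { intros NM u Hu. destruct (classic (exists v, sim1 lt x v /\ lt v u)) as [[v [A B]]|N].
    - apply step_p with v; auto. eapply sim1_via; eauto.
    - exfalso. apply NM. exists u. split; auto. intros y Hy Hl. apply N; eauto. }
  destruct (classic (exists M, sim1 lt x M /\ forall y, sim1 lt x y -> ~ lt M y)) as [[M [HM1 HM2]]|NM];
  destruct (classic (exists m, sim1 lt x m /\ forall y, sim1 lt x y -> ~ lt y m)) as [[m [Hm1 Hm2]]|Nm].
  -
    right; right; right.
    assert (E0 : exists n, Nat.iter n s m = M).
    { destruct (lin_tot HL m M) as [E|[E|E]].
      - exists 0. simpl. auto.
      - apply chain_s; auto. eapply sim1_via; eauto.
      - exfalso. exact (Hm2 M HM1 E). }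
    destruct (min_nat _ E0) as [N [EN HN]].
    set (h := fun n => Nat.iter n s m).
    assert (Hh : forall i, sim1 lt x (h i)).
    { intros i. eapply (sim1_trans HL); eauto. apply sim1_s. }
    assert (sM : s M = M).
    { destruct (succ_next lt M) as [A|[_ A]]; auto. exfalso.
      apply (HM2 (s M)). apply (sim1_trans HL) with M; auto. apply sim1_imm; auto. apply A. }
    exists N, h. split; [|split].
    + intros i _. auto.
    + intros u Hu. destruct (lin_tot HL m u) as [E|[E|E]].
      * exists 0. split. lia. simpl. auto.
      * destruct (chain_s E) as [k Ek]. eapply sim1_via; eauto.
        destruct (le_lt_dec k N) as [C|C].
        -- exists k. auto.
        -- exists N. split; auto. rewrite <- Ek. unfold h.
           replace k with ((k - N) + N) by lia. rewrite iter_add. rewrite EN. rewrite iter_fix; auto.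
      * exfalso. exact (Hm2 u Hu E).
    + apply (mono_bnd HL). intros i Hi.
      assert (Lt : lt (h i) M).
      { destruct (lin_tot HL (h i) M) as [E|[E|E]]; auto.
        - exfalso. exact (HN i Hi E).
        - exfalso. exact (HM2 (h i) (Hh i) E). }
      apply step_s with M; auto. eapply sim1_via; eauto.
  -
    right; left.
    exists (fun n => Nat.iter n p M). split; [|split].
    + intros n. eapply (sim1_trans HL); eauto. apply sim1_p.
    + intros u Hu. destruct (lin_tot HL M u) as [E|[E|E]].
      * exists 0. simpl. auto.
      * exfalso. exact (HM2 u Hu E).
      * apply chain_p; auto. eapply sim1_via; eauto.
    + apply (mono_nat (lin_rv HL) (fun n => Nat.iter n p M)). intros i. unfold rv. simpl.
      apply down; auto. eapply (sim1_trans HL); eauto. apply sim1_p.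
  -
    left.
    exists (fun n => Nat.iter n s m). split; [|split].
    + intros n. eapply (sim1_trans HL); eauto. apply sim1_s.
    + intros u Hu. destruct (lin_tot HL m u) as [E|[E|E]].
      * exists 0. simpl. auto.
      * apply chain_s; auto. eapply sim1_via; eauto.
      * exfalso. exact (Hm2 u Hu E).
    + apply (mono_nat HL (fun n => Nat.iter n s m)). intros i. simpl.
      apply up; auto. eapply (sim1_trans HL); eauto. apply sim1_s.
  -
    right; right; left.
    set (h := fun (q : Z) => if Z.leb 0 q then Nat.iter (Z.to_nat q) s x else Nat.iter (Z.to_nat (- q)) p x).
    assert (Hh : forall q, sim1 lt x (h q)).
    { intros q. unfold h. destruct (Z.leb 0 q). apply sim1_s. apply sim1_p. }
    exists h. split; [|split]; auto.
    + intros u Hu. destruct (lin_tot HL x u) as [E|[E|E]].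
      * exists 0%Z. subst. reflexivity.
      * destruct (chain_s E Hu) as [n En]. exists (Z.of_nat n). unfold h.
        assert (B : Z.leb 0 (Z.of_nat n) = true) by (apply Z.leb_le; lia). rewrite B.
        rewrite Nat2Z.id. auto.
      * destruct (chain_p E Hu) as [n En]. destruct n as [|n].
        -- exists 0%Z. simpl in En. subst. reflexivity.
        -- exists (- Z.of_nat (S n))%Z. unfold h.
           assert (B : Z.leb 0 (- Z.of_nat (S n)) = false) by (apply Z.leb_gt; lia). rewrite B.
           replace (Z.to_nat (- - Z.of_nat (S n))) with (S n) by lia. auto.
    + apply (mono_Z HL). intros q.
      destruct (Z_le_gt_dec 0 q) as [C|C].
      * unfold h. assert (B1 : Z.leb 0 q = true) by (apply Z.leb_le; lia).
        assert (B2 : Z.leb 0 (q + 1) = true) by (apply Z.leb_le; lia). rewrite B1, B2.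
        replace (Z.to_nat (q + 1)) with (S (Z.to_nat q)) by lia. simpl.
        apply up; auto. apply sim1_s.
      * destruct (Z.eq_dec q (-1)) as [D|D].
        -- subst. unfold h. simpl. apply down; auto. apply sim1_refl; auto.
        -- unfold h. assert (B1 : Z.leb 0 q = false) by (apply Z.leb_gt; lia).
           assert (B2 : Z.leb 0 (q + 1) = false) by (apply Z.leb_gt; lia). rewrite B1, B2.
           replace (Z.to_nat (- q)) with (S (Z.to_nat (- (q + 1)))) by lia. simpl.
           apply down; auto. apply sim1_p.
Qed.

End Cls.
Lemma NoDup_map_gen {A B : Type} (f : A -> B) (l : list A) :
  (forall a b, In a l -> In b l -> f a = f b -> a = b) -> NoDup l -> NoDup (map f l).
Proof.
  induction l as [|a l IH]; simpl; intros H N. constructor.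
  inversion N; subst. constructor.
  - intro I. apply in_map_iff in I. destruct I as [b [E I]].
    assert (a = b) by (apply H; auto). subst. contradiction.
  - apply IH; auto.
Qed.

Section Iso.
Context {T : Type} (lt : T -> T -> Prop) (HL : linear_order lt).
Implicit Types (x y u v w : T).

Lemma fin_card x N h : fin_param lt x N h -> block_card lt (S N) x.
Proof.
  intros [A [B C]]. exists (map h (seq 0 (S N))). split; [|split].
  - apply NoDup_map_gen; [|apply seq_NoDup].
    intros a b Ia Ib E. apply in_seq in Ia. apply in_seq in Ib.
    destruct (Nat.lt_trichotomy a b) as [F|[F|F]]; auto; exfalso.
    + apply C in F; try lia. rewrite E in F. eapply (lin_irr HL); eauto.
    + apply C in F; try lia. rewrite E in F. eapply (lin_irr HL); eauto.
  - rewrite length_map, length_seq. auto.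
  - intros y. split.
    + intros Hy. destruct (B y Hy) as [i [Hi Ei]]. apply in_map_iff. exists i. split; auto. apply in_seq. lia.
    + intros I. apply in_map_iff in I. destruct I as [i [Ei I]]. apply in_seq in I. subst. apply A. lia.
Qed.

Lemma inf_card x (h : nat -> T) n : (forall i j, h i = h j -> i = j) -> (forall i, sim1 lt x (h i)) ->
  block_card lt n x -> False.
Proof.
  intros Inj Hh [l [N [L H]]].
  assert (K : length (map h (seq 0 (S n))) <= length l).
  { apply NoDup_incl_length.
    - apply NoDup_map_gen; [|apply seq_NoDup]. auto.
    - intros y I. apply in_map_iff in I. destruct I as [i [Ei _]]. subst. apply H. auto. }
  rewrite length_map, length_seq in K. lia.
Qed.

Lemma card_unique x n n' : block_card lt n x -> block_card lt n' x -> n = n'.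
Proof.
  intros [l [N [L H]]] [l' [N' [L' H']]].
  assert (length l <= length l'). { apply NoDup_incl_length; auto. intros y I. apply H'. apply H. auto. }
  assert (length l' <= length l). { apply NoDup_incl_length; auto. intros y I. apply H. apply H'. auto. }
  lia.
Qed.

Lemma omega_notcard x n : block_iso_omega lt x -> block_card lt n x -> False.
Proof. intros [h [A [_ C]]]. apply inf_card with h; auto.
  intros i j E. destruct (Nat.lt_trichotomy i j) as [F|[F|F]]; auto; exfalso;
  apply C in F; rewrite E in F; eapply (lin_irr HL); eauto. Qed.

Lemma omega_star_notcard x n : block_iso_omega_star lt x -> block_card lt n x -> False.
Proof. intros [h [A [_ C]]]. apply inf_card with h; auto.
  intros i j E. destruct (Nat.lt_trichotomy i j) as [F|[F|F]]; auto; exfalso;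
  apply C in F; rewrite E in F; eapply (lin_irr HL); eauto. Qed.

Lemma zeta_notcard x n : block_iso_zeta lt x -> block_card lt n x -> False.
Proof. intros [h [A [_ C]]]. apply inf_card with (fun i => h (Z.of_nat i)); auto.
  intros i j E. destruct (Nat.lt_trichotomy i j) as [F|[F|F]]; auto; exfalso.
  - assert (G : (Z.of_nat i < Z.of_nat j)%Z) by lia. apply C in G. rewrite E in G. eapply (lin_irr HL); eauto.
  - assert (G : (Z.of_nat j < Z.of_nat i)%Z) by lia. apply C in G. rewrite E in G. eapply (lin_irr HL); eauto.
Qed.

Lemma same_type_iso x y : same_type lt x y -> exists f, blockiso lt x y f.
Proof.
  intros [Ew [Ez [Es Ec]]].
  destruct (classify HL x) as [H|[H|[H|[N [h H]]]]].
  - pose proof H as [h1 [A1 [B1 C1]]]. apply Ew in H. destruct H as [h2 [A2 [B2 C2]]].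
    apply (param_iso HL (fun m n => m < n) (fun _ => True) h1 h2); clear -A1 B1 C1 A2 B2 C2;
      [ intros i _; solve [auto] | intros u Hu; destruct (B1 u Hu) as [i Hi]; exists i; tauto
      | intros i j _ _; solve [auto] | intros i _; solve [auto]
      | intros u Hu; destruct (B2 u Hu) as [i Hi]; exists i; tauto | intros i j _ _; solve [auto] ].
  - pose proof H as [h1 [A1 [B1 C1]]]. apply Es in H. destruct H as [h2 [A2 [B2 C2]]].
    apply (param_iso HL (fun m n => n < m) (fun _ => True) h1 h2); clear -A1 B1 C1 A2 B2 C2;
      [ intros i _; solve [auto] | intros u Hu; destruct (B1 u Hu) as [i Hi]; exists i; tauto
      | intros i j _ _; solve [auto] | intros i _; solve [auto]
      | intros u Hu; destruct (B2 u Hu) as [i Hi]; exists i; tauto | intros i j _ _; solve [auto] ].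
  - pose proof H as [h1 [A1 [B1 C1]]]. apply Ez in H. destruct H as [h2 [A2 [B2 C2]]].
    apply (param_iso HL Z.lt (fun _ => True) h1 h2); clear -A1 B1 C1 A2 B2 C2;
      [ intros i _; solve [auto] | intros u Hu; destruct (B1 u Hu) as [i Hi]; exists i; tauto
      | intros i j _ _; solve [auto] | intros i _; solve [auto]
      | intros u Hu; destruct (B2 u Hu) as [i Hi]; exists i; tauto | intros i j _ _; solve [auto] ].
  - pose proof (fin_card H) as K. pose proof K as K'. apply Ec in K'.
    destruct (classify HL y) as [G|[G|[G|[N' [h' G]]]]].
    + exfalso. eapply omega_notcard; eauto.
    + exfalso. eapply omega_star_notcard; eauto.
    + exfalso. eapply zeta_notcard; eauto.
    + pose proof (card_unique K' (fin_card G)) as EN. assert (N' = N) by lia. subst N'.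
      destruct H as [A1 [B1 C1]]. destruct G as [A2 [B2 C2]].
      apply (param_iso HL (fun m n => m < n) (fun i => i <= N) h h'); auto.
Qed.

End Iso.
Section Fin.
Context {T : Type} (lt : T -> T -> Prop) (HL : linear_order lt).
Implicit Types (x y u v w : T).

Lemma sim1_next_s x : sim1 lt x (succ_fun lt x).
Proof. exact (sim1_next HL (succ_next lt) x). Qed.
Lemma sim1_next_p x : sim1 lt x (pred_fun lt x).
Proof. apply sim1_rv. exact (sim1_next (lin_rv HL) (pred_next lt) x). Qed.

Lemma gen_iter_s l n x : gen lt l x -> gen lt l (Nat.iter n (succ_fun lt) x).
Proof. intros H; induction n; simpl; auto. apply gen_succ; auto. Qed.
Lemma gen_iter_p l n x : gen lt l x -> gen lt l (Nat.iter n (pred_fun lt) x).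
Proof. intros H; induction n; simpl; auto. apply gen_pred; auto. Qed.

Lemma gen_iff l x : gen lt l x <-> exists a, In a l /\ sim1 lt a x.
Proof. split.
  - induction 1 as [x H|x H [a [I S]]|x H [a [I S]]].
    + exists x. split; auto. apply sim1_refl; auto.
    + exists a. split; auto. apply (sim1_trans HL) with x; auto. apply sim1_next_s.
    + exists a. split; auto. apply (sim1_trans HL) with x; auto. apply sim1_next_p.
  - intros [a [I S]]. destruct (lin_tot HL a x) as [E|[E|E]].
    + subst. apply gen_base; auto.
    + destruct (chain_s HL E S) as [n En]. subst. apply gen_iter_s. apply gen_base; auto.
    + destruct (chain_p HL E S) as [n En]. subst. apply gen_iter_p. apply gen_base; auto.
Qed.

Definition closed (A : T -> Prop) := forall x y, A x -> sim1 lt x y -> A y.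

Lemma gen_closed l : closed (gen lt l).
Proof. intros x y H S. apply gen_iff in H. destruct H as [a [I S']]. apply gen_iff.
  exists a. split; auto. apply (sim1_trans HL) with x; auto. Qed.

Lemma iso_blockiso A B f x : iso_sp lt A B f -> closed A -> A x -> blockiso lt x (f x) f.
Proof.
  intros [H1 [H2 [H3 [H4 [H5 H6]]]]] Cl Ax.
  assert (Is : forall n, A (Nat.iter n (succ_fun lt) x) /\
     f (Nat.iter n (succ_fun lt) x) = Nat.iter n (succ_fun lt) (f x)).
  { induction n; simpl; auto. destruct IHn as [P Q]. split.
    - apply Cl with (Nat.iter n (succ_fun lt) x); auto. apply sim1_next_s.
    - rewrite H5; auto. congruence. }
  assert (Ip : forall n, A (Nat.iter n (pred_fun lt) x) /\
     f (Nat.iter n (pred_fun lt) x) = Nat.iter n (pred_fun lt) (f x)).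
  { induction n; simpl; auto. destruct IHn as [P Q]. split.
    - apply Cl with (Nat.iter n (pred_fun lt) x); auto. apply sim1_next_p.
    - rewrite H6; auto. congruence. }
  split; [|split].
  - intros u Hu. destruct (lin_tot HL x u) as [E|[E|E]].
    + subst. apply sim1_refl; auto.
    + destruct (chain_s HL E Hu) as [n En]. subst. rewrite (proj2 (Is n)). apply sim1_s; auto.
    + destruct (chain_p HL E Hu) as [n En]. subst. rewrite (proj2 (Ip n)). apply sim1_p; auto.
  - intros v Hv. destruct (lin_tot HL (f x) v) as [E|[E|E]].
    + exists x. split; auto. apply sim1_refl; auto.
    + destruct (chain_s HL E Hv) as [n En]. subst. exists (Nat.iter n (succ_fun lt) x).
      split. apply sim1_s; auto. apply Is.
    + destruct (chain_p HL E Hv) as [n En]. subst. exists (Nat.iter n (pred_fun lt) x).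
      split. apply sim1_p; auto. apply Ip.
  - intros u u' Hu Hu'. apply H4; apply Cl with x; auto.
Qed.

Lemma iso_sp_of (A B : T -> Prop) f : closed A ->
  (forall x, A x -> blockiso lt x (f x) f) ->
  (forall x y, A x -> A y -> ~ sim1 lt x y -> lt x y -> lt (f x) (f y)) ->
  (forall x, A x -> B (f x)) -> (forall y, B y -> exists x, A x /\ sim1 lt (f x) y) ->
  iso_sp lt A B f.
Proof.
  intros Cl Bi Cr Im On.
  assert (Mono : forall x y, A x -> A y -> lt x y -> lt (f x) (f y)).
  { intros x y Ax Ay Hxy. destruct (classic (sim1 lt x y)) as [S|S]; auto.
    destruct (Bi x Ax) as [_ [_ C]]. apply (proj1 (C x y (sim1_refl HL x) S)); auto. }
  split; [|split; [|split; [|split; [|split]]]].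
  - auto.
  - intros y By. destruct (On y By) as [x [Ax S]]. destruct (Bi x Ax) as [_ [C _]].
    destruct (C y S) as [u [Su Eu]]. exists u. split; auto. apply Cl with x; auto.
  - intros x y Ax Ay E. destruct (lin_tot HL x y) as [F|[F|F]]; auto; exfalso;
    apply Mono in F; auto; rewrite E in F; eapply (lin_irr HL); eauto.
  - intros x y Ax Ay. split; auto. intros F.
    destruct (lin_tot HL x y) as [G|[G|G]]; auto; exfalso.
    + subst. eapply (lin_irr HL); eauto.
    + apply Mono in G; auto. eapply (lin_asym HL); eauto.
  - intros x Ax. apply (blockiso_next HL (succ_next lt) (Bi x Ax)). apply sim1_refl; auto.
  - intros x Ax. apply (blockiso_next (lin_rv HL) (pred_next lt) (blockiso_rv (Bi x Ax))).
    apply sim1_refl. apply lin_rv; auto.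
Qed.

Lemma aut_of_iso g : iso_sp lt (fun _ => True) (fun _ => True) g -> aut_sp lt g.
Proof. intros [H1 [H2 [H3 [H4 [H5 H6]]]]]. split; [|split; [|split; [|split]]]; auto.
  intros y. destruct (H2 y I) as [x [_ E]]. eauto. Qed.

Lemma iso_of_aut g : aut_sp lt g -> iso_sp lt (fun _ => True) (fun _ => True) g.
Proof. intros [H1 [H2 [H3 [H4 H5]]]]. split; [|split; [|split; [|split; [|split]]]]; auto.
  intros y _. destruct (H2 y) as [x E]. eauto. Qed.

Lemma bi_sim1 g x y : blockiso lt x (g x) g -> (forall u, sim1 lt x u -> g u = g y -> u = y) ->
  (sim1 lt x y <-> sim1 lt (g x) (g y)).
Proof. intros [A [B C]] Inj. split.
  - intros S. apply A; auto.
  - intros S. destruct (B _ S) as [u [Su Eu]]. rewrite <- (Inj u Su Eu). auto. Qed.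

Definition cls x : Phi lt := exist _ (block lt x) (ex_intro _ x eq_refl).
Definition rep (a : Phi lt) : T := proj1_sig (constructive_indefinite_description _ (proj2_sig a)).

Lemma rep_spec a : proj1_sig a = block lt (rep a).
Proof. unfold rep. destruct (constructive_indefinite_description _ _). simpl. auto. Qed.

Lemma Phi_ext (a b : Phi lt) : proj1_sig a = proj1_sig b -> a = b.
Proof. destruct a as [P HP], b as [Q HQ]. simpl. intros E. subst. f_equal. apply proof_irrelevance. Qed.

Lemma cls_rep a : cls (rep a) = a.
Proof. apply Phi_ext. simpl. symmetry. apply rep_spec. Qed.

Lemma sim1_funeq x z : sim1 lt x z -> sim1 lt x = sim1 lt z.
Proof. intros H. extensionality y. apply propositional_extensionality. split; intro K.
  - apply (sim1_trans HL) with x; auto. apply sim1_sym; auto.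
  - apply (sim1_trans HL) with z; auto. Qed.

Lemma cls_eq x y : cls x = cls y <-> sim1 lt x y.
Proof. split.
  - intros E. apply (f_equal (@proj1_sig _ _)) in E. simpl in E.
    assert (K : block lt y y) by (apply sim1_refl; auto). rewrite <- E in K. exact K.
  - intros S. apply Phi_ext. simpl. unfold block. rewrite (sim1_funeq S). auto.
Qed.

Lemma Phi_cases (a : Phi lt) : exists x, a = cls x.
Proof. exists (rep a). symmetry. apply cls_rep. Qed.

Lemma rep_cls x : sim1 lt (rep (cls x)) x.
Proof. apply cls_eq. apply cls_rep. Qed.

Lemma shift_lt a b a' : ~ sim1 lt a b -> lt a b -> sim1 lt a a' -> lt a' b.
Proof. intros N H S. destruct (lin_tot HL a' b) as [E|[E|E]]; auto; exfalso.
  - subst. auto.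
  - apply N. apply (sim1_convex HL) with a'; auto. Qed.

Lemma shift_lt2 a b b' : ~ sim1 lt a b -> lt a b -> sim1 lt b b' -> lt a b'.
Proof. intros N H S. destruct (lin_tot HL a b') as [E|[E|E]]; auto; exfalso.
  - subst. apply N. apply sim1_sym; auto.
  - apply N. apply (sim1_trans HL) with b'.
    + apply sim1_sym. apply (sim1_convex HL) with b; auto. apply sim1_sym; auto.
    + apply sim1_sym; auto. Qed.

Lemma Phi_lt_cls x y : Phi_lt (cls x) (cls y) <-> ~ sim1 lt x y /\ lt x y.
Proof. split.
  - intros [x' [y' [A [B [N L]]]]]. simpl in A, B. unfold block in A, B.
    split.
    + intro S. apply N. apply (sim1_trans HL) with x. apply sim1_sym; auto.
      apply (sim1_trans HL) with y; auto.
    + assert (L1 : lt x y') by (apply shift_lt with x'; auto; apply sim1_sym; auto).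
      apply shift_lt2 with y'; auto.
      * intro S. apply N. apply (sim1_trans HL) with x; auto. apply sim1_sym; auto.
      * apply sim1_sym; auto.
  - intros [N L]. exists x, y. simpl. unfold block. split. apply sim1_refl; auto.
    split. apply sim1_refl; auto. auto.
Qed.

Lemma card0 x : block_card lt 0 x -> False.
Proof. intros [l [_ [L H]]]. destruct l; [|simpl in L; lia]. apply (H x). apply sim1_refl; auto. Qed.

Lemma Phi_w_cls x : Phi_w (cls x) <-> block_iso_omega lt x.
Proof. unfold Phi_w. simpl. unfold block. split.
  - intros [z [S H]]. unfold block_iso_omega in *. rewrite (sim1_funeq S). exact H.
  - intros H. exists x. split; auto. apply sim1_refl; auto. Qed.
Lemma Phi_z_cls x : Phi_z (cls x) <-> block_iso_zeta lt x.
Proof. unfold Phi_z. simpl. unfold block. split.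
  - intros [z [S H]]. unfold block_iso_zeta in *. rewrite (sim1_funeq S). exact H.
  - intros H. exists x. split; auto. apply sim1_refl; auto. Qed.
Lemma Phi_sw_cls x : Phi_sw (cls x) <-> block_iso_omega_star lt x.
Proof. unfold Phi_sw. simpl. unfold block. split.
  - intros [z [S H]]. unfold block_iso_omega_star in *. rewrite (sim1_funeq S). exact H.
  - intros H. exists x. split; auto. apply sim1_refl; auto. Qed.
Lemma Phi_c_cls n x : Phi_c n (cls x) <-> 1 <= n /\ block_card lt n x.
Proof. unfold Phi_c. simpl. unfold block. split.
  - intros [N [z [S H]]]. split; auto. unfold block_card in *. rewrite (sim1_funeq S). exact H.
  - intros [N H]. split; auto. exists x. split; auto. apply sim1_refl; auto. Qed.

Definition PhiSame (a b : Phi lt) :=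
  (Phi_w a <-> Phi_w b) /\ (Phi_z a <-> Phi_z b) /\ (Phi_sw a <-> Phi_sw b) /\
  (forall n, 1 <= n -> (Phi_c n a <-> Phi_c n b)).

Lemma PhiSame_cls a b : PhiSame (cls a) (cls b) <-> same_type lt a b.
Proof. unfold PhiSame, same_type. rewrite !Phi_w_cls, !Phi_z_cls, !Phi_sw_cls. split.
  - intros [A [B [C D]]]. split; [|split; [|split]]; auto. intros n. destruct n as [|n].
    + split; intro K; exfalso; eapply card0; eauto.
    + specialize (D (S n) ltac:(lia)). rewrite !Phi_c_cls in D. split; intro K; apply D; split; auto; lia.
  - intros [A [B [C D]]]. split; [|split; [|split]]; auto. intros n N. rewrite !Phi_c_cls.
    rewrite D. tauto.
Qed.

Lemma induced g (A : T -> Prop) x : closed A -> (forall x, A x -> blockiso lt x (g x) g) -> A x ->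
  cls (g (rep (cls x))) = cls (g x).
Proof. intros Cl Bi Ax. apply cls_eq. apply sim1_sym. destruct (Bi x Ax) as [P _]. apply P.
  apply sim1_sym. apply rep_cls. Qed.

Lemma aut_Phi_of g : aut_sp lt g -> aut_Phi (fun a => cls (g (rep a))).
Proof.
  intros Hg. pose proof (iso_of_aut Hg) as Hi.
  assert (Cl : closed (fun _ => True)) by (intros ? ? ? ?; auto).
  assert (Bi : forall x, blockiso lt x (g x) g) by (intro x; apply (iso_blockiso x Hi Cl); auto).
  assert (Ind : forall x, cls (g (rep (cls x))) = cls (g x)) by (intro x; apply (induced (A := fun _ => True)); auto).
  assert (Sim : forall x y, sim1 lt x y <-> sim1 lt (g x) (g y)).
  { intros x y. apply bi_sim1; auto. intros u _ E. destruct Hg as [Inj _]. auto. }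
  destruct Hg as [Inj [Surj [Ord _]]].
  split; [|split; [|split; [|split; [|split; [|split]]]]].
  - intros a b. destruct (Phi_cases a) as [x ->]. destruct (Phi_cases b) as [y ->]. rewrite !Ind.
    rewrite !cls_eq. apply Sim.
  - intros b. destruct (Phi_cases b) as [y ->]. destruct (Surj y) as [x Ex]. exists (cls x).
    rewrite Ind. congruence.
  - intros a b. destruct (Phi_cases a) as [x ->]. destruct (Phi_cases b) as [y ->]. rewrite !Ind.
    rewrite !Phi_lt_cls. rewrite Sim, Ord. tauto.
  - intros a. destruct (Phi_cases a) as [x ->]. rewrite Ind. rewrite !Phi_w_cls. apply (blockiso_same HL (Bi x)).
  - intros a. destruct (Phi_cases a) as [x ->]. rewrite Ind. rewrite !Phi_z_cls. apply (blockiso_same HL (Bi x)).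
  - intros a. destruct (Phi_cases a) as [x ->]. rewrite Ind. rewrite !Phi_sw_cls. apply (blockiso_same HL (Bi x)).
  - intros n a N. destruct (Phi_cases a) as [x ->]. rewrite Ind. rewrite !Phi_c_cls. 
    pose proof (blockiso_same HL (Bi x)) as [_ [_ [_ K]]]. rewrite K. tauto.
Qed.

Lemma dir1 : homogeneous_sp lt -> homogeneous_Phi lt.
Proof.
  intros Hsp A' B' F [lA HA] [lB HB] HF.
  pose proof HF as [F1 [F2 [F3 [F4 [F5 [F6 [F7 F8]]]]]]].
  set (Psi := fun a => match excluded_middle_informative (exists phi, blockiso lt (rep a) (rep (F a)) phi) with
                       | left H => proj1_sig (constructive_indefinite_description _ H)
                       | right _ => fun u => u end).
  assert (HPsi : forall a, A' a -> blockiso lt (rep a) (rep (F a)) (Psi a)).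
  { intros a Aa. unfold Psi. destruct (excluded_middle_informative _) as [H|H].
    - destruct (constructive_indefinite_description _ H). simpl. auto.
    - exfalso. apply H. apply same_type_iso; auto. apply PhiSame_cls. rewrite !cls_rep.
      split; [|split; [|split]]; auto. }
  set (f := fun x => match excluded_middle_informative (A' (cls x)) with
                     | left _ => Psi (cls x) x | right _ => x end).
  set (A := fun x => A' (cls x)). set (B := fun y => B' (cls y)).
  assert (ClA : closed A). { intros x y Ax S. unfold A. rewrite <- (proj2 (cls_eq x y) S). auto. }
  assert (Hfx : forall x, A x -> f x = Psi (cls x) x).
  { intros x Ax. unfold f. destruct (excluded_middle_informative _); [auto|contradiction]. }
  assert (Key : forall x, A x -> blockiso lt x (f x) f /\ cls (f x) = F (cls x)).
  { intros x Ax. pose proof (HPsi _ Ax) as Bi.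
    assert (S1 : sim1 lt (rep (F (cls x))) (f x)).
    { rewrite Hfx; auto. destruct Bi as [P _]. apply P. apply rep_cls. }
    split.
    - apply blockiso_ext with (Psi (cls x)).
      + apply (blockiso_shift HL Bi). apply rep_cls. auto.
      + intros u Hu. assert (E : cls u = cls x) by (apply cls_eq; apply sim1_sym; auto).
        rewrite Hfx. rewrite E. auto. apply ClA with x; auto.
    - rewrite <- (cls_rep (F (cls x))). apply cls_eq. apply sim1_sym. auto. }
  assert (Hiso : iso_sp lt A B f).
  { apply iso_sp_of; auto.
    - intros x Ax. apply Key; auto.
    - intros x y Ax Ay N L. assert (K : Phi_lt (cls x) (cls y)) by (apply Phi_lt_cls; auto).
      apply F4 in K; auto. rewrite <- (proj2 (Key x Ax)), <- (proj2 (Key y Ay)) in K.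
      apply Phi_lt_cls in K. tauto.
    - intros x Ax. unfold B. rewrite (proj2 (Key x Ax)). apply F1. auto.
    - intros y By. destruct (F2 _ By) as [a [Aa Ea]]. exists (rep a).
      assert (Ar : A (rep a)) by (unfold A; rewrite cls_rep; auto). split; auto.
      apply cls_eq. rewrite (proj2 (Key _ Ar)). rewrite cls_rep. auto. }
  assert (FgA : fg_substructure lt A).
  { exists (map rep lA). intros x. rewrite gen_iff. unfold A. rewrite HA. split.
    - intros I. exists (rep (cls x)). split. apply in_map; auto. apply rep_cls.
    - intros [a [I S]]. apply in_map_iff in I. destruct I as [b [Eb I]]. subst a.
      assert (E : cls x = b) by (rewrite <- (cls_rep b); apply cls_eq; apply sim1_sym; auto).
      rewrite E; auto. }
  assert (FgB : fg_substructure lt B).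
  { exists (map rep lB). intros x. rewrite gen_iff. unfold B. rewrite HB. split.
    - intros I. exists (rep (cls x)). split. apply in_map; auto. apply rep_cls.
    - intros [a [I S]]. apply in_map_iff in I. destruct I as [b [Eb I]]. subst a.
      assert (E : cls x = b) by (rewrite <- (cls_rep b); apply cls_eq; apply sim1_sym; auto).
      rewrite E; auto. }
  destruct (Hsp A B f FgA FgB Hiso) as [g [Hg Ext]].
  exists (fun a => cls (g (rep a))). split.
  - apply aut_Phi_of; auto.
  - intros a Aa. assert (Ar : A (rep a)) by (unfold A; rewrite cls_rep; auto).
    rewrite Ext; auto. rewrite (proj2 (Key _ Ar)). rewrite cls_rep. auto.
Qed.

Lemma dir2 : homogeneous_Phi lt -> homogeneous_sp lt.
Proof.
  intros HPhi A B f [l HA] [l' HB] Hf.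
  assert (ClA : closed A). { intros x y Ax S. apply HA. apply HA in Ax. apply (gen_closed Ax S). }
  assert (ClB : closed B). { intros x y Ax S. apply HB. apply HB in Ax. apply (gen_closed Ax S). }
  assert (Bi : forall x, A x -> blockiso lt x (f x) f) by (intros x Ax; apply (iso_blockiso x Hf ClA Ax)).
  pose proof Hf as [H1 [H2 [H3 [H4 [H5 H6]]]]].
  set (A' := fun a => exists x, A x /\ a = cls x).
  set (B' := fun a => exists x, B x /\ a = cls x).
  set (F := fun a => cls (f (rep a))).
  assert (Ind : forall x, A x -> F (cls x) = cls (f x)) by (intros x Ax; exact (induced x ClA Bi Ax)).
  assert (Sim : forall x y, A x -> A y -> (sim1 lt x y <-> sim1 lt (f x) (f y))).
  { intros x y Ax Ay. apply bi_sim1; auto. intros u Su E. apply H3; auto. apply ClA with x; auto. }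
  assert (FA : fin_subset A').
  { exists (map cls l). intros a. split.
    - intros [x [Ax ->]]. apply HA in Ax. apply gen_iff in Ax. destruct Ax as [b [I S]].
      rewrite <- (proj2 (cls_eq b x) S). apply in_map; auto.
    - intros I. apply in_map_iff in I. destruct I as [x [E I]]. exists x. split; auto.
      apply HA. apply gen_base; auto. }
  assert (FB : fin_subset B').
  { exists (map cls l'). intros a. split.
    - intros [x [Ax ->]]. apply HB in Ax. apply gen_iff in Ax. destruct Ax as [b [I S]].
      rewrite <- (proj2 (cls_eq b x) S). apply in_map; auto.
    - intros I. apply in_map_iff in I. destruct I as [x [E I]]. exists x. split; auto.
      apply HB. apply gen_base; auto. }
  assert (FI : iso_Phi A' B' F).
  { split; [|split; [|split; [|split; [|split; [|split; [|split]]]]]].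
    - intros a [x [Ax ->]]. exists (f x). split; auto.
    - intros b [y [By ->]]. destruct (H2 y By) as [x [Ax Ex]]. exists (cls x). split.
      exists x; auto. rewrite Ind; auto. congruence.
    - intros a b [x [Ax ->]] [y [Ay ->]]. rewrite !Ind; auto. rewrite !cls_eq. apply Sim; auto.
    - intros a b [x [Ax ->]] [y [Ay ->]]. rewrite !Ind; auto. rewrite !Phi_lt_cls.
      rewrite (Sim x y Ax Ay), (H4 x y Ax Ay). tauto.
    - intros a [x [Ax ->]]. rewrite Ind; auto. rewrite !Phi_w_cls. apply (blockiso_same HL (Bi x Ax)).
    - intros a [x [Ax ->]]. rewrite Ind; auto. rewrite !Phi_z_cls. apply (blockiso_same HL (Bi x Ax)).
    - intros a [x [Ax ->]]. rewrite Ind; auto. rewrite !Phi_sw_cls. apply (blockiso_same HL (Bi x Ax)).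
    - intros n a N [x [Ax ->]]. rewrite Ind; auto. rewrite !Phi_c_cls.
      pose proof (blockiso_same HL (Bi x Ax)) as [_ [_ [_ K]]]. rewrite K. tauto. }
  destruct (HPhi A' B' F FA FB FI) as [G [HG ExtG]].
  pose proof HG as [G1 [G2 [G3 [G4 [G5 [G6 G7]]]]]].
  set (Psi := fun a => match excluded_middle_informative (exists phi, blockiso lt (rep a) (rep (G a)) phi) with
                       | left H => proj1_sig (constructive_indefinite_description _ H)
                       | right _ => fun u => u end).
  assert (HPsi : forall a, blockiso lt (rep a) (rep (G a)) (Psi a)).
  { intros a. unfold Psi. destruct (excluded_middle_informative _) as [H|H].
    - destruct (constructive_indefinite_description _ H). simpl. auto.
    - exfalso. apply H. apply same_type_iso; auto. apply PhiSame_cls. rewrite !cls_rep.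
      split; [|split; [|split]]; auto. }
  set (g := fun x => match excluded_middle_informative (A x) with
                     | left _ => f x | right _ => Psi (cls x) x end).
  assert (Key : forall x, blockiso lt x (g x) g /\ cls (g x) = G (cls x)).
  { intros x. destruct (classic (A x)) as [Ax|Ax].
    - assert (Eg : forall u, sim1 lt x u -> g u = f u).
      { intros u Su. unfold g. destruct (excluded_middle_informative _) as [_|N]; auto.
        exfalso. apply N. apply ClA with x; auto. }
      split.
      + rewrite (Eg x (sim1_refl HL x)). apply blockiso_ext with f; auto. intros u Su. symmetry; auto.
      + rewrite (Eg x (sim1_refl HL x)). rewrite ExtG. symmetry. apply Ind; auto. exists x; auto.
    - assert (Eg : forall u, sim1 lt x u -> g u = Psi (cls x) u).
      { intros u Su. unfold g. destruct (excluded_middle_informative _) as [Au|_].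
        - exfalso. apply Ax. apply ClA with u; auto. apply sim1_sym; auto.
        - assert (E : cls u = cls x) by (apply cls_eq; apply sim1_sym; auto). rewrite E; auto. }
      pose proof (HPsi (cls x)) as Bi'.
      assert (S1 : sim1 lt (rep (G (cls x))) (g x)).
      { rewrite (Eg x (sim1_refl HL x)). destruct Bi' as [P _]. apply P. apply rep_cls. }
      split.
      + apply blockiso_ext with (Psi (cls x)).
        * apply (blockiso_shift HL Bi'). apply rep_cls. auto.
        * intros u Su. symmetry; auto.
      + rewrite <- (cls_rep (G (cls x))). apply cls_eq. apply sim1_sym. auto. }
  exists g. split.
  - apply aut_of_iso. apply iso_sp_of; auto.
    + intros ? ? ? ?; auto.
    + intros x _. apply Key.
    + intros x y _ _ N L. assert (K : Phi_lt (cls x) (cls y)) by (apply Phi_lt_cls; auto).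
      apply G3 in K. rewrite <- (proj2 (Key x)), <- (proj2 (Key y)) in K.
      apply Phi_lt_cls in K. tauto.
    + intros y _. destruct (G2 (cls y)) as [a Ea]. destruct (Phi_cases a) as [x ->].
      exists x. split; auto. apply cls_eq. rewrite (proj2 (Key x)). auto.
  - intros x Ax. unfold g. destruct (excluded_middle_informative _); [auto|contradiction].
Qed.

End Fin.

Theorem mainTheorem3 (T : Type) (lt : T -> T -> Prop) (HL : linear_order lt) :
  homogeneous_sp lt <-> homogeneous_Phi lt.
Proof. split; [apply dir1 | apply dir2]; auto. Qed.
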